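(* Let $n\ge2$, $m=3$, $r=1$, and $E_1\ge E_2\ge\dots\ge E_n>0$. Define $$U_i=\frac{i}{\frac{3}{E_1}+\sum_{k=2}^i\frac1{E_k}}\ (1\le i\le n),\qquad V_i=\frac{i-1}{\sum_{k=1}^i\frac1{E_k}}\ (2\le i\le n),$$ let $u$ be the least index in $\arg\max_{1\le i\le n}U_i$ and $v$ the least index in $\arg\max_{2\le i\le n}V_i$. If $V_v>U_u$, then $\mathbf{p}^*$ with $p^*_k=\frac{1/E_k}{\sum_{j=1}^v1/E_j}$ for $k\le v$ and $p^*_k=0$ for $k>v$ maximizes $f^{\mathrm{worst}}$ over $\mathcal{I}$. If $U_u\ge V_v$, then $\mathbf{p}^*$ with $p^*_1=\frac{3/E_1}{3/E_1+\sum_{j=2}^u1/E_j}$, $p^*_k=\frac{1/E_k}{3/E_1+\sum_{j=2}^u1/E_j}$ for $2\le k\le u$, and $p^*_k=0$ for $k>u$, maximizes $f^{\mathrm{worst}}$ over $\mathcal{I}$. In both cases the optimal value $\max_{\mathbf{p}\in\mathcal{I}}f^{\mathrm{worst}}(\mathbf{p})$ equals $\max\{U_u,V_v\}$.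
   Context: $\mathcal{I}=\{\mathbf{p}\in[0,1]^n:\sum_kp_k=1\}$; $\mathcal{J}_2=\{\mathbf{x}\in\{0,1,2\}^n:\sum_jx_j=2\}$; $f(\mathbf{p},\mathbf{x})=\sum_k\frac{E_kp_k}{1+x_k}$; $f^{\mathrm{worst}}(\mathbf{p})=\min_{\mathbf{x}\in\mathcal{J}_2}f(\mathbf{p},\mathbf{x})$. *)

(* Defs.v *)
(* R is an arbitrary realFieldType. Indices 1..n of the
   paper are 'I_n (0-based): paper index k corresponds to k-1. *)
From mathcomp Require Import all_boot all_order all_algebra.
Set Implicit Arguments. Unset Strict Implicit. Unset Printing Implicit Defensive.
Import Order.TTheory GRing.Theory Num.Theory.
Local Open Scope ring_scope.

Definition inI (R : realFieldType) (n : nat) (p : 'I_n -> R) : Prop :=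
  (forall k, 0 <= p k <= 1) /\ \sum_(k < n) p k = 1.

Definition J2 (n : nat) : {pred {ffun 'I_n -> 'I_3}} :=
  fun x => (\sum_(j < n) (x j : nat))%N == 2%N.

Definition fval (R : realFieldType) (n : nat) (E p : 'I_n -> R)
  (x : {ffun 'I_n -> 'I_3}) : R :=
  \sum_(k < n) E k * p k / (1 + (x k : nat)%:R).

Definition x0 (n : nat) : {ffun 'I_n -> 'I_3} :=
  [ffun i => if val i == 0%N then inord 2 else inord 0].

(* f^worst(p) = min_{x in J2} f(p, x)  (x0 lies in J2 whenever n >= 1) *)
Definition fworst (R : realFieldType) (n : nat) (E p : 'I_n -> R) : R :=
  \big[Num.min/fval E p (x0 n)]_(x : {ffun 'I_n -> 'I_3} | @J2 n x) fval E p x.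

Definition U (R : realFieldType) (n : nat) (E : 'I_n -> R) (i : 'I_n) : R :=
  (val i).+1%:R /
    \sum_(k < n | (val k <= val i)%N) (if val k == 0%N then 3 else 1) / E k.

Definition V (R : realFieldType) (n : nat) (E : 'I_n -> R) (i : 'I_n) : R :=
  (val i)%:R / \sum_(k < n | (val k <= val i)%N) 1 / E k.

Definition pV (R : realFieldType) (n : nat) (E : 'I_n -> R) (v : 'I_n)
  (k : 'I_n) : R :=
  if (val k <= val v)%N
  then (1 / E k) / \sum_(j < n | (val j <= val v)%N) 1 / E j
  else 0.

Definition pU (R : realFieldType) (n : nat) (E : 'I_n -> R) (u : 'I_n)
  (k : 'I_n) : R :=
  if (val k <= val u)%N
  then ((if val k == 0%N then 3 else 1) / E k) /
       \sum_(j < n | (val j <= val u)%N) (if val j == 0%N then 3 else 1) / E j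
  else 0.

(* Main.v *)
Require Import Defs.
From mathcomp Require Import all_boot all_order all_algebra.
From mathcomp Require Import ring lra.
Import Order.TTheory GRing.Theory Num.Theory.
Set Implicit Arguments. Unset Strict Implicit. Unset Printing Implicit Defensive.
Local Open Scope ring_scope.

Lemma count_lt (R : realFieldType) (n j : nat) : (j <= n)%N ->
  \sum_(k < n | (val k < j)%N) (1:R) = j%:R.
Proof.
move=> hj; rewrite (big_ord_narrow (F := fun _ => (1:R)) hj) sumr_const card_ord.
by [].
Qed.

Lemma fworst_le (R : realFieldType) (n : nat) (E p : 'I_n -> R) x :
  J2 x -> fworst E p <= fval E p x.
Proof. by move=> hx; rewrite /fworst (bigD1 x) //= ge_min lexx. Qed.

Lemma fworst_ge (R : realFieldType) (n : nat) (E p : 'I_n -> R) (M : R) :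
  M <= fval E p (x0 n) -> (forall x, J2 x -> M <= fval E p x) ->
  M <= fworst E p.
Proof.
move=> h0 h; rewrite /fworst; apply: (big_ind (fun y => M <= y)) => //.
by move=> y z hy hz; rewrite le_min hy hz.
Qed.

Definition x2 (n : nat) (m : 'I_n) : {ffun 'I_n -> 'I_3} :=
  [ffun i => if i == m then inord 2 else inord 0].
Definition x11 (n : nat) (m s : 'I_n) : {ffun 'I_n -> 'I_3} :=
  [ffun i => if (i == m) || (i == s) then inord 1 else inord 0].

Lemma val_inord3 (k : nat) : (k < 3)%N -> nat_of_ord (inord k : 'I_3) = k.
Proof. by move=> h; rewrite inordK. Qed.

Lemma J2_x2 n (m : 'I_n) : J2 (x2 m).
Proof.
rewrite /J2 /x2 (bigD1 m) //= ffunE eqxx val_inord3 // big1 //.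
by move=> i /negbTE hi; rewrite ffunE hi val_inord3.
Qed.

Lemma J2_x11 n (m s : 'I_n) : m != s -> J2 (x11 m s).
Proof.
move=> hms; rewrite /J2 /x11 (bigD1 m) //= (bigD1 s) /=; last by rewrite eq_sym hms.
rewrite !ffunE !eqxx !orbT /= !val_inord3 // big1 //.
by move=> i /andP[/negbTE h1 /negbTE h2]; rewrite ffunE h1 h2 val_inord3.
Qed.

Lemma J2_x0 n : (0 < n)%N -> J2 (x0 n).
Proof.
move=> hn; rewrite /J2 /x0 (bigD1 (Ordinal hn)) //= ffunE eqxx val_inord3 // big1 //.
move=> i hi; rewrite ffunE; case: eqP => h; last by rewrite val_inord3.
by move: hi; have -> : i = Ordinal hn by apply: val_inj.
Qed.

Lemma fval_x2 (R : realFieldType) n (E p : 'I_n -> R) m :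
  fval E p (x2 m) = \sum_k E k * p k - 2/3 * (E m * p m).
Proof.
rewrite /fval (bigD1 m) //= [in RHS](bigD1 m) //= ffunE eqxx val_inord3 //.
rewrite (eq_bigr (fun k => E k * p k)).
  by rewrite -[(2:nat)%:R]/(2:R); field.
by move=> i /negbTE hi; rewrite ffunE hi val_inord3 // addr0 divr1.
Qed.

Lemma fval_x11 (R : realFieldType) n (E p : 'I_n -> R) m s : m != s ->
  fval E p (x11 m s) = \sum_k E k * p k - (E m * p m + E s * p s) / 2.
Proof.
move=> hms; rewrite /fval (bigD1 m) //= [in RHS](bigD1 m) //=.
rewrite (bigD1 s) /=; last by rewrite eq_sym hms.
rewrite [in RHS](bigD1 s) /=; last by rewrite eq_sym hms.
rewrite !ffunE !eqxx !orbT /= val_inord3 //.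
rewrite (eq_bigr (fun k => E k * p k)).
  by rewrite -[(1:nat)%:R]/(1:R); field.
by move=> i /andP[/negbTE h1 /negbTE h2]; rewrite ffunE h1 h2 val_inord3 // addr0 divr1.
Qed.

Lemma prefix (R : realFieldType) n (g : 'I_n -> R) :
  (forall i k : 'I_n, (val i <= val k)%N -> g k <= g i) ->
  exists j, [/\ (j <= n)%N, forall k : 'I_n, (val k < j)%N -> 0 < g k
             & forall k : 'I_n, (j <= val k)%N -> g k <= 0].
Proof.
move=> hm; case: (pickP (fun k => g k <= 0)) => [k0 hk0|hnone].
  case: (@arg_minnP _ k0 (fun k => g k <= 0) (fun k : 'I_n => val k) hk0) => k1 hk1 hmin.
  exists (val k1); split.
  - exact: ltnW (ltn_ord k1).
  - move=> k hk; rewrite ltNge; apply/negP => hg.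
    by have := hmin k hg; rewrite leqNgt hk.
  - by move=> k hk; apply: le_trans (hm _ _ hk) hk1.
exists n; split => //.
  by move=> k hk; have := hnone k; rewrite /= ltNge => ->.
by move=> k hk; have := ltn_ord k; rewrite ltnNge hk.
Qed.

Lemma upper (R : realFieldType) n (E : 'I_n -> R) (hn : (2 <= n)%N)
  (Epos : forall k, 0 < E k)
  (Edec : forall i j : 'I_n, (val i <= val j)%N -> E j <= E i)
  (mu : R) (mu0 : 0 <= mu) (hU : forall i, U E i <= mu)
  (hV : forall i : 'I_n, (1 <= val i)%N -> V E i <= mu)
  (q : 'I_n -> R) : inI q -> fworst E q <= mu.
Proof.
case=> q01 qsum.
have n0 : (0 < n)%N by apply: leq_trans hn.
pose k0 : 'I_n := Ordinal n0.
pose a k := E k * q k.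
pose g k := 1 - mu / E k.
have a0 k : 0 <= a k.
  by rewrite /a; apply: mulr_ge0; [exact: ltW | case/andP: (q01 k)].
have key1 : \sum_k a k - mu = \sum_k a k * g k.
  rewrite -[in LHS](mulr1 mu) -qsum mulr_sumr -sumrB; apply: eq_bigr => k _.
  rewrite /a /g; have hE := Epos k; field; by rewrite gt_eqF.
have gmono : forall i k : 'I_n, (val i <= val k)%N -> g k <= g i.
  move=> i k hik; rewrite /g lerD2l lerN2 ler_wpM2l // lef_pV2 ?posrE //.
  exact: Edec.
have [j [hjn hlt hge]] := prefix gmono.
pose S := \sum_(k < n | (val k < j)%N) 1 / E k.
have S0 : 0 <= S by apply: sumr_ge0 => k _; rewrite divr_ge0 // ltW.
have hP : \sum_k Num.max (g k) 0 = j%:R - mu * S.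
  rewrite (bigID (fun k : 'I_n => (val k < j)%N)) /= [X in _ + X]big1; last first.
    by move=> k; rewrite -leqNgt => hk; apply: max_r; apply: hge.
  rewrite addr0 -(count_lt R hjn) mulr_sumr -sumrB; apply: eq_bigr => k hk.
  by rewrite max_l ?ltW ?hlt // /g div1r.
have Spos : (0 < j)%N -> 0 < S.
  move=> hj0; rewrite /S (bigD1 k0) //=; apply: ltr_pwDl.
    by rewrite divr_gt0.
  by apply: sumr_ge0 => k _; rewrite divr_ge0 // ltW.
have eqS : (0 < j)%N -> forall k : 'I_n, (val k <= j.-1)%N = (val k < j)%N.
  by move=> hj0 k; rewrite -[in RHS](prednK hj0) ltnS.
have ej : (0 < j)%N -> j%:R = (j.-1)%:R + 1 :> R.
  by move=> hj0; rewrite natr1 prednK.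
have hj1 : (j.-1 < n)%N by move: hjn; case: (j) => [|j'] //= _.
have P1 : \sum_k Num.max (g k) 0 <= 1.
  rewrite hP; case: (leqP 2 j) => hj2.
    have hj0 : (0 < j)%N by apply: leq_trans hj2.
    have := hV (Ordinal hj1) _; rewrite /V /= (eq_bigl _ _ (eqS hj0)) -/S.
    rewrite ler_pdivrMr ?Spos // ej // => /(_ _) h.
    have {h} h := h (ltac:(by move: hj2; case: (j) => [|[|j'']])).
    nra.
  have : (j%:R : R) <= 1%:R by rewrite ler_nat -ltnS.
  have : 0 <= mu * S by rewrite mulr_ge0.
  lra.
have P2 : forall m, 0 < g m -> 2 * g m + \sum_k Num.max (g k) 0 <= 2.
  move=> m gm.
  have hj0 : (0 < j)%N.
    rewrite lt0n; apply/negP => /eqP hj.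
    by have := hge m; rewrite hj leq0n => /(_ isT); rewrite leNgt gm.
  have hk0 : (val k0 < j)%N by [].
  have := hU (Ordinal hj1); rewrite /U /= (eq_bigl _ _ (eqS hj0)).
  rewrite (eq_bigr (fun k : 'I_n => 1 / E k + (if val k == 0%N then 2 else 0) / E k)); last first.
    move=> k _; have hE := Epos k; case: (val k == 0%N); field; by rewrite gt_eqF.
  rewrite big_split /= -/S (bigD1 k0) //= big1 ?addr0; last first.
    move=> k /andP[_ hk]; rewrite (_ : (val k == 0%N) = false) ?mul0r //.
    apply/negbTE; apply: contra hk => /eqP h; apply/eqP; exact: val_inj.
  have hE0 := Epos k0.
  have D0 : 0 < S + 2 / E k0 by apply: ltr_pwDr; [rewrite divr_gt0 | ].
  rewrite ler_pdivrMr // prednK // => hD.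
  have := gmono k0 m (leq0n _); rewrite /g => hgm.
  rewrite hP.
  have e2 : mu * (S + 2 / E k0) = mu * S + 2 * (mu / E k0) by ring.
  rewrite e2 in hD; move: hgm; rewrite /g; lra.
have [m _ hm] := @arg_maxP _ _ _ k0 predT a isT.
have [k1 hk1] : exists k1 : 'I_n, k1 != m.
  case: (eqVneq m k0) => [->|h]; last by exists k0; rewrite eq_sym.
  by exists (Ordinal hn); apply/eqP => /(congr1 val).
have [s hs hsm] := @arg_maxP _ _ _ k1 (fun k => k != m) a hk1.
pose G := \sum_(k < n | k != m) Num.max (g k) 0.
have hsplit : \sum_k Num.max (g k) 0 = Num.max (g m) 0 + G by rewrite (bigD1 m).
have G0 : 0 <= G by apply: sumr_ge0 => k _; rewrite le_max lexx orbT.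
have hag : \sum_k a k * g k <= a m * g m + a s * G.
  rewrite (bigD1 m) //= lerD2l /G mulr_sumr; apply: ler_sum => k hk.
  have h1 := hsm k hk; have h2 := a0 k.
  have h3 : g k <= Num.max (g k) 0 by rewrite le_max lexx.
  have h4 : 0 <= Num.max (g k) 0 by rewrite le_max lexx orbT.
  by apply: (le_trans (ler_wpM2l h2 h3)); apply: ler_wpM2r.
have ams : a s <= a m := hm s isT.
have as0 := a0 s.
have hfin : \sum_k a k * g k <= Num.max (2/3 * a m) ((a m + a s)/2).
  apply: le_trans hag _.
  case: (lerP (g m) 0) => hg.
    move: P1; rewrite hsplit max_r // add0r => G1.
    have am0 := a0 m.
    have : a m * g m <= 0 by nra.
    have : a s * G <= a s by nra.
    move=> *; rewrite le_max; apply/orP; right; lra.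
  have am0 := a0 m.
  have := P2 m hg; move: P1; rewrite hsplit max_l; last exact: ltW hg.
  move=> h1 h2.
  case: (lerP (a m/3) (a s)) => h.
    have H : a m * g m + a s * G <= (a m + a s)/2 by nra.
    by apply: (le_trans H); rewrite le_max lexx orbT.
  have H : a m * g m + a s * G <= 2/3 * a m by nra.
  by apply: (le_trans H); rewrite le_max lexx.
have f1 : fworst E q <= \sum_k a k - 2/3 * a m.
  apply: le_trans (fworst_le _ _ (J2_x2 m)) _; rewrite fval_x2; exact: lexx.
have hms : m != s by rewrite eq_sym.
have f2 : fworst E q <= \sum_k a k - (a m + a s) / 2.
  apply: le_trans (fworst_le _ _ (J2_x11 hms)) _; rewrite fval_x11 //; exact: lexx.
move: hfin; rewrite -key1 le_max => /orP[] h; lra.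
Qed.

Lemma termA (R : realFieldType) (a b : R) (x : 'I_3) : 0 <= a -> a <= b ->
  a - (x : nat)%:R * (b / 2) <= a / (1 + (x : nat)%:R).
Proof.
case: x => [[|[|[|]]] //= _] ha hb.
- by rewrite mul0r subr0 addr0 divr1.
- by rewrite ler_pdivlMr ?ltr01 //; lra.
- by rewrite ler_pdivlMr; lra.
Qed.

Lemma termB (R : realFieldType) (a b : R) (x : 'I_3) : 0 <= a -> a <= 3 * b -> 0 <= b ->
  a - (x : nat)%:R * (b / 2) - b <= a / (1 + (x : nat)%:R).
Proof.
case: x => [[|[|[|]]] //= _] ha hb b0.
- by rewrite mul0r subr0 addr0 divr1; lra.
- by rewrite ler_pdivlMr; lra.
- by rewrite ler_pdivlMr; lra.
Qed.

Lemma inI_gen (R : realFieldType) n (w : 'I_n -> R) (t : 'I_n)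
  (wpos : forall k, 0 < w k) :
  inI (fun k => if (val k <= val t)%N
                then w k / \sum_(j < n | (val j <= val t)%N) w j else 0).
Proof.
set S := \sum_(j < n | _) _.
have Sge : forall k : 'I_n, (val k <= val t)%N -> w k <= S.
  move=> k hk; rewrite /S (bigD1 k) //= lerDl.
  by apply: sumr_ge0 => i _; apply: ltW.
have S0 : 0 < S by apply: lt_le_trans (wpos t) (Sge t (leqnn _)).
split.
  move=> k; case: ifP => hk; last by rewrite lexx ler01.
  apply/andP; split; first by rewrite divr_ge0 ?ltW.
  rewrite ler_pdivrMr // mul1r; exact: Sge.
rewrite -big_mkcond /= -mulr_suml divff //; exact: lt0r_neq0.
Qed.

Lemma lowerV (R : realFieldType) n (E : 'I_n -> R) (hn : (2 <= n)%N)
  (Epos : forall k, 0 < E k) (v : 'I_n) : V E v <= fworst E (pV E v).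
Proof.
have n0 : (0 < n)%N by apply: leq_trans hn.
set Sv := \sum_(j < n | (val j <= val v)%N) 1 / E j.
have Sv0 : 0 < Sv.
  rewrite /Sv (bigD1 v) //=; apply: ltr_pwDl; first by rewrite divr_gt0.
  by apply: sumr_ge0 => i _; rewrite divr_ge0 // ltW.
pose b := 1 / Sv.
have b0 : 0 < b by rewrite /b divr_gt0.
have aV : forall k, E k * pV E v k = if (val k <= val v)%N then b else 0.
  move=> k; rewrite /pV -/Sv; case: ifP => _; last by rewrite mulr0.
  have hE := Epos k; rewrite /b; field.
  by rewrite (gt_eqF hE) (gt_eqF Sv0).
have hA : \sum_k E k * pV E v k = (val v).+1%:R * b.
  rewrite (eq_bigr _ (fun k _ => aV k)) -big_mkcond /=.
  rewrite -(count_lt R (ltn_ord v)) mulr_suml; apply: eq_big => // k _.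
  by rewrite mul1r.
have hVv : V E v = (val v)%:R * b by rewrite /V -/Sv /b mul1r.
have low : forall x, J2 x -> (val v)%:R * b <= fval E (pV E v) x.
  move=> x hx; rewrite /fval.
  have : \sum_k (E k * pV E v k - (x k : nat)%:R * (b / 2))
         <= \sum_k E k * pV E v k / (1 + (x k : nat)%:R).
    apply: ler_sum => k _; rewrite aV; apply: termA; case: ifP => _; lra.
  rewrite sumrB hA -mulr_suml -natr_sum (eqP hx) -natr1 => h.
  apply: le_trans h; lra.
rewrite hVv; apply: fworst_ge; [apply: low; exact: J2_x0 | exact: low].
Qed.

Lemma lowerU (R : realFieldType) n (E : 'I_n -> R) (hn : (2 <= n)%N)
  (Epos : forall k, 0 < E k) (u : 'I_n) : U E u <= fworst E (pU E u).
Proof.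
have n0 : (0 < n)%N by apply: leq_trans hn.
pose k0 : 'I_n := Ordinal n0.
set Du := \sum_(j < n | (val j <= val u)%N) (if val j == 0%N then 3 else 1) / E j.
have Du0 : 0 < Du.
  rewrite /Du (bigD1 u) //=; apply: ltr_pwDl.
    by rewrite divr_gt0 //; case: ifP.
  by apply: sumr_ge0 => i _; rewrite divr_ge0 ?ltW //; case: ifP.
pose b := 1 / Du.
have b0 : 0 < b by rewrite /b divr_gt0.
have aU : forall k, E k * pU E u k =
    if (val k <= val u)%N then (if val k == 0%N then 3 else 1) * b else 0.
  move=> k; rewrite /pU -/Du; case: ifP => _; last by rewrite mulr0.
  have hE := Epos k; rewrite /b; field.
  by rewrite (gt_eqF hE) (gt_eqF Du0).
have cst : \sum_(k < n | (val k <= val u)%N) b = (val u).+1%:R * b.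
  rewrite -(count_lt R (ltn_ord u)) mulr_suml; apply: eq_big => // k _.
  by rewrite mul1r.
have hA : \sum_k E k * pU E u k = ((val u).+1%:R + 2) * b.
  rewrite (eq_bigr _ (fun k _ => aU k)) -big_mkcond /=.
  rewrite (eq_bigr (fun k => b + (if val k == 0%N then 2 * b else 0))); last first.
    by move=> k _; case: (val k == 0%N); lra.
  rewrite big_split /= cst (bigD1 k0) //= big1 ?addr0; first lra.
  move=> k /andP[_ hk]; rewrite (_ : (val k == 0%N) = false) //.
  apply/negbTE; apply: contra hk => /eqP h; apply/eqP; exact: val_inj.
have hUu : U E u = (val u).+1%:R * b by rewrite /U -/Du /b mul1r.
have low : forall x, J2 x -> (val u).+1%:R * b <= fval E (pU E u) x.
  move=> x hx; rewrite /fval.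
  have : \sum_k (E k * pU E u k - (x k : nat)%:R * (b / 2)
                 - (if val k == 0%N then b else 0))
         <= \sum_k E k * pU E u k / (1 + (x k : nat)%:R).
    apply: ler_sum => k _; rewrite aU.
    case hk0: (val k == 0%N); [apply: termB | rewrite subr0; apply: termA];
      (try case: ifP => _); lra.
  rewrite !sumrB hA -mulr_suml -natr_sum (eqP hx) (bigD1 k0) //= big1 ?addr0.
    move=> h; apply: le_trans h; lra.
  move=> k hk; rewrite (_ : (val k == 0%N) = false) //.
  apply/negbTE; apply: contra hk => /eqP h; apply/eqP; exact: val_inj.
rewrite hUu; apply: fworst_ge; [apply: low; exact: J2_x0 | exact: low].
Qed.

Theorem theorem3 (R : realFieldType) (n : nat) (E : 'I_n -> R)
  (hn : (2 <= n)%N)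
  (Epos : forall k : 'I_n, 0 < E k)
  (Edec : forall i j : 'I_n, (val i <= val j)%N -> E j <= E i)
  (u v : 'I_n)
  (u_max : forall i : 'I_n, U E i <= U E u)
  (u_least : forall i : 'I_n, U E i = U E u -> (val u <= val i)%N)
  (v_ge : (1 <= val v)%N)
  (v_max : forall i : 'I_n, (1 <= val i)%N -> V E i <= V E v)
  (v_least : forall i : 'I_n, (1 <= val i)%N -> V E i = V E v ->
               (val v <= val i)%N) :
  (U E u < V E v ->
     inI (pV E v) /\
     (forall q : 'I_n -> R, inI q -> fworst E q <= fworst E (pV E v)) /\
     fworst E (pV E v) = Num.max (U E u) (V E v)) /\
  (V E v <= U E u ->
     inI (pU E u) /\
     (forall q : 'I_n -> R, inI q -> fworst E q <= fworst E (pU E u)) /\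
     fworst E (pU E u) = Num.max (U E u) (V E v)).
Proof.
have V0 : 0 <= V E v.
  rewrite /V divr_ge0 ?ler0n //; apply: sumr_ge0 => k _.
  by rewrite divr_ge0 // ltW.
have mu0 : 0 <= Num.max (U E u) (V E v) by rewrite le_max V0 orbT.
have hU' : forall i, U E i <= Num.max (U E u) (V E v).
  by move=> i; rewrite le_max u_max.
have hV' : forall i : 'I_n, (1 <= val i)%N -> V E i <= Num.max (U E u) (V E v).
  by move=> i hi; rewrite le_max v_max ?orbT.
have up := upper hn Epos Edec mu0 hU' hV'.
split => h.
  have eqM : Num.max (U E u) (V E v) = V E v by apply: max_r; exact: ltW.
  have lo := lowerV hn Epos v.
  have hin : inI (pV E v).
    rewrite /pV; exact: (@inI_gen _ _ (fun k => 1 / E k) v (fun k => divr_gt0 ltr01 (Epos k))).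
  split => //; split.
    by move=> q hq; apply: le_trans (up q hq) _; rewrite eqM.
  by apply/eqP; rewrite eq_le up //= eqM lo.
have eqM : Num.max (U E u) (V E v) = U E u by apply: max_l.
have lo := lowerU hn Epos u.
have hin : inI (pU E u).
  rewrite /pU; apply: (@inI_gen _ _ (fun k => (if val k == 0%N then 3 else 1) / E k) u).
  by move=> k; rewrite divr_gt0 //; case: ifP.
split => //; split.
  by move=> q hq; apply: le_trans (up q hq) _; rewrite eqM.
by apply/eqP; rewrite eq_le up //= eqM lo.
Qed.
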